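(* Let $G\le\mathrm{O}(d)$ be finite and let $z_1,\ldots,z_n\in\mathbb{R}^d$. Then the max filter bank $\Phi:\mathbb{R}^d/G\to\mathbb{R}^n$, $\Phi([x])=(\langle\!\langle[z_i],[x]\rangle\!\rangle)_{i=1}^n$, satisfies $$\sup_{\substack{[x],[y]\in\mathbb{R}^d/G\\ [x]\ne[y]}}\frac{\|\Phi([x])-\Phi([y])\|}{d([x],[y])}=\max\Big\{\big\|[\,g_1z_1\ \cdots\ g_nz_n\,]\big\|_{2\to2}\;:\;g_1,\ldots,g_n\in G,\ \textstyle\bigcap_{i=1}^n V_{g_iz_i}\ne\varnothing\Big\},$$ where $[\,g_1z_1\ \cdots\ g_nz_n\,]$ is the $d\times n$ matrix with columns $g_iz_i$.
   Context: For $x\in\mathbb{R}^d$, $[x]:=\{gx:g\in G\}$; $\mathbb{R}^d/G$ is the set of orbits with quotient metric $d([x],[y]):=\min_{p\in[x],q\in[y]}\|p-q\|$. Max filtering: $\langle\!\langle[x],[y]\rangle\!\rangle:=\max_{p\in[x],q\in[y]}\langle p,q\rangle$. The open Voronoi cell $V_x$ of $x$ is the set of $y\in\mathbb{R}^d$ such that $x$ is the unique maximizer of $\langle p,y\rangle$ over $p\in[x]$. $\|A\|_{2\to2}$ denotes the operator (spectral) norm. *)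

(* Defs.v *)
From HB Require Import structures.
From mathcomp Require Import all_boot all_order all_algebra.
From mathcomp Require Import boolp classical_sets reals.
Set Implicit Arguments. Unset Strict Implicit. Unset Printing Implicit Defensive.
Import Order.TTheory GRing.Theory Num.Theory.
Local Open Scope ring_scope.
Local Open Scope classical_set_scope.

Section MaxFilter.
Variable R : realType.

Definition dotv (k : nat) (u v : 'cV[R]_k) : R := \sum_(a < k) u a 0 * v a 0.
Definition enorm (k : nat) (v : 'cV[R]_k) : R := Num.sqrt (dotv v v).

Definition opnorm (m k : nat) (A : 'M[R]_(m, k)) : R :=
  sup [set enorm (A *m v) | v in [set v : 'cV[R]_k | enorm v <= 1]].

Definition is_finite_orth_group (d : nat) (G : seq 'M[R]_d) : Prop :=
  [/\ 1%:M \in G,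
      (forall g h, g \in G -> h \in G -> g *m h \in G),
      (forall g, g \in G -> g^T \in G) &
      (forall g, g \in G -> g^T *m g = 1%:M)].

Definition orbit (d : nat) (G : seq 'M[R]_d) (x : 'cV[R]_d) : set 'cV[R]_d :=
  [set g *m x | g in [set g | g \in G]].

(* quotient metric d([x],[y]) = min_{p in [x], q in [y]} ||p - q||
   (the sets are finite and nonempty, so inf = min) *)
Definition qdist (d : nat) (G : seq 'M[R]_d) (x y : 'cV[R]_d) : R :=
  inf [set r | exists p q : 'cV[R]_d, [/\ orbit G x p, orbit G y q & r = enorm (p - q)]].

Definition maxfilt (d : nat) (G : seq 'M[R]_d) (x y : 'cV[R]_d) : R :=
  sup [set r | exists p q : 'cV[R]_d, [/\ orbit G x p, orbit G y q & r = dotv p q]].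

Definition voronoi (d : nat) (G : seq 'M[R]_d) (x : 'cV[R]_d) : set 'cV[R]_d :=
  [set y | (forall p, orbit G x p -> dotv p y <= dotv x y) /\
           (forall p, orbit G x p -> dotv p y = dotv x y -> p = x)].

Definition Phi (d n : nat) (G : seq 'M[R]_d) (z : 'I_n -> 'cV[R]_d)
  (x : 'cV[R]_d) : 'cV[R]_n := \col_(i < n) maxfilt G (z i) x.

Definition lip_quotients (d n : nat) (G : seq 'M[R]_d) (z : 'I_n -> 'cV[R]_d)
  : set R :=
  [set r | exists x y : 'cV[R]_d, orbit G x <> orbit G y /\
     r = enorm (Phi G z x - Phi G z y) / qdist G x y].

Definition colmat (d n : nat) (g : 'I_n -> 'M[R]_d) (z : 'I_n -> 'cV[R]_d)
  : 'M[R]_(d, n) := \matrix_(a < d, i < n) (g i *m z i) a 0.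

Definition admissible (d n : nat) (G : seq 'M[R]_d) (z : 'I_n -> 'cV[R]_d)
  (g : 'I_n -> 'M[R]_d) : Prop :=
  (forall i, g i \in G) /\
  exists y : 'cV[R]_d, forall i, voronoi G (g i *m z i) y.

End MaxFilter.

(* Main.v *)
Require Import Defs.
From HB Require Import structures.
From mathcomp Require Import all_boot all_order all_algebra.
From mathcomp Require Import boolp classical_sets reals.
From mathcomp Require Import ring lra zify.
Import Order.TTheory GRing.Theory Num.Theory.
Local Open Scope ring_scope.
Local Open Scope classical_set_scope.
Set Implicit Arguments. Unset Strict Implicit. Unset Printing Implicit Defensive.

Lemma dotvC (R : realType) k (u v : 'cV[R]_k) : dotv u v = dotv v u.
Proof. by apply: eq_bigr => a _; rewrite mulrC. Qed.

Lemma dotvDl (R : realType) k (u v w : 'cV[R]_k) :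
  dotv (u + v) w = dotv u w + dotv v w.
Proof. by rewrite /dotv -big_split; apply: eq_bigr => a _; rewrite !mxE mulrDl. Qed.

Lemma dotvZl (R : realType) k c (u w : 'cV[R]_k) :
  dotv (c *: u) w = c * dotv u w.
Proof. by rewrite /dotv mulr_sumr; apply: eq_bigr => a _; rewrite !mxE mulrA. Qed.

Lemma dotvNl (R : realType) k (u w : 'cV[R]_k) : dotv (- u) w = - dotv u w.
Proof. by rewrite -scaleN1r dotvZl mulN1r. Qed.

Lemma dotvBl (R : realType) k (u v w : 'cV[R]_k) :
  dotv (u - v) w = dotv u w - dotv v w.
Proof. by rewrite dotvDl dotvNl. Qed.

Lemma dotvDr (R : realType) k (u v w : 'cV[R]_k) :
  dotv w (u + v) = dotv w u + dotv w v.
Proof. by rewrite dotvC dotvDl !(dotvC w). Qed.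

Lemma dotvZr (R : realType) k c (u w : 'cV[R]_k) :
  dotv w (c *: u) = c * dotv w u.
Proof. by rewrite dotvC dotvZl dotvC. Qed.

Lemma dotvBr (R : realType) k (u v w : 'cV[R]_k) :
  dotv w (u - v) = dotv w u - dotv w v.
Proof. by rewrite dotvC dotvBl !(dotvC w). Qed.

Lemma dotv0l (R : realType) k (w : 'cV[R]_k) : dotv 0 w = 0.
Proof. by rewrite /dotv big1 // => a _; rewrite mxE mul0r. Qed.

Lemma dotv0r (R : realType) k (w : 'cV[R]_k) : dotv w 0 = 0.
Proof. by rewrite dotvC dotv0l. Qed.

Lemma dotv_ge0 (R : realType) k (u : 'cV[R]_k) : 0 <= dotv u u.
Proof. by apply: sumr_ge0 => a _; rewrite -expr2 sqr_ge0. Qed.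

Lemma dotv_eq0 (R : realType) k (u : 'cV[R]_k) : dotv u u = 0 -> u = 0.
Proof.
move=> /eqP; rewrite psumr_eq0 => [/allP H|a _]; last by rewrite -expr2 sqr_ge0.
apply/matrixP => a b; rewrite (ord1 b) mxE.
have := H a (mem_index_enum a); rewrite -expr2 /= sqrf_eq0.
by move/eqP.
Qed.

Lemma dotv_mull (R : realType) m k (A : 'M[R]_(m, k)) u v :
  dotv (A *m u) v = dotv u (A^T *m v).
Proof.
rewrite /dotv. under eq_bigr => a _ do rewrite mxE mulr_suml.
rewrite exchange_big /=; apply: eq_bigr => b _.
rewrite mxE mulr_sumr; apply: eq_bigr => a _; rewrite !mxE; ring.
Qed.

Lemma enorm_ge0 (R : realType) k (u : 'cV[R]_k) : 0 <= enorm u.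
Proof. exact: sqrtr_ge0. Qed.

Lemma enorm_sq (R : realType) k (u : 'cV[R]_k) : enorm u ^+ 2 = dotv u u.
Proof. by rewrite sqr_sqrtr // dotv_ge0. Qed.

Lemma enorm_le (R : realType) k (u : 'cV[R]_k) c :
  0 <= c -> (enorm u <= c) = (dotv u u <= c ^+ 2).
Proof.
move=> c0; rewrite -{1}(ger0_norm c0) -sqrtr_sqr /enorm ler_sqrt //.
exact: sqr_ge0.
Qed.

Lemma enorm0 (R : realType) k : enorm (0 : 'cV[R]_k) = 0.
Proof. by rewrite /enorm dotv0l sqrtr0. Qed.

Lemma enorm_eq0 (R : realType) k (u : 'cV[R]_k) : enorm u = 0 -> u = 0.
Proof. by move=> H; apply: dotv_eq0; rewrite -enorm_sq H expr0n. Qed.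

Lemma enormZ (R : realType) k c (u : 'cV[R]_k) : enorm (c *: u) = `|c| * enorm u.
Proof.
rewrite /enorm dotvZl dotvZr mulrA -expr2 sqrtrM ?sqr_ge0 //.
by rewrite sqrtr_sqr.
Qed.

Lemma enormN (R : realType) k (u : 'cV[R]_k) : enorm (- u) = enorm u.
Proof. by rewrite -scaleN1r enormZ normrN normr1 mul1r. Qed.

Lemma CS (R : realType) k (u v : 'cV[R]_k) : dotv u v <= enorm u * enorm v.
Proof.
have [v0|vn0] := eqVneq (dotv v v) 0.
  by rewrite (dotv_eq0 v0) dotv0r mulr_ge0 // enorm_ge0.
have c0 : 0 < dotv v v by rewrite lt_def vn0 dotv_ge0.
set a := dotv u u; set b := dotv u v; set c := dotv v v.
have H : 0 <= dotv (u - (b / c) *: v) (u - (b / c) *: v) by apply: dotv_ge0.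
rewrite !dotvBl !dotvBr !dotvZl !dotvZr (dotvC v u) -/a -/b -/c in H.
have H2 : b ^+ 2 <= a * c.
  have : 0 <= a * c - b ^+ 2.
    have -> : a * c - b ^+ 2 = c * (a - b / c * b - (b / c * b - b / c * (b / c * c))).
      by field; rewrite gt_eqF.
    by rewrite mulr_ge0 // ltW.
  by rewrite subr_ge0.
have : `|b| <= enorm u * enorm v.
  rewrite -sqrtr_sqr /enorm -sqrtrM ?dotv_ge0 //.
  by rewrite ler_sqrt // mulr_ge0 // ?dotv_ge0 // ltW.
by apply: le_trans; rewrite ler_norm.
Qed.

Lemma enormD (R : realType) k (u v : 'cV[R]_k) : enorm (u + v) <= enorm u + enorm v.
Proof.
rewrite enorm_le ?addr_ge0 ?enorm_ge0 // dotvDl !dotvDr (dotvC v u).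
have := CS u v; rewrite -!enorm_sq; nra.
Qed.

Lemma CSabs (R : realType) k (u v : 'cV[R]_k) : `|dotv u v| <= enorm u * enorm v.
Proof.
have := CS u v; have := CS (- u) v; rewrite dotvNl enormN => h1 h2.
by rewrite ler_norml h2 andbT lerNl.
Qed.

Lemma sq_le (R : realType) (x y : R) : `|x| <= y -> x ^+ 2 <= y ^+ 2.
Proof. rewrite ler_norml => /andP[h1 h2]; nra. Qed.

Definition opset (R : realType) m k (A : 'M[R]_(m, k)) :=
  [set enorm (A *m v) | v in [set v : 'cV[R]_k | enorm v <= 1]].

Lemma opset_ub (R : realType) m k (A : 'M[R]_(m, k)) : has_ubound (opset A).
Proof.
pose M := \sum_(a < m) enorm (\col_j A a j) ^+ 2.
exists (Num.sqrt M) => _ [v /= hv <-].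
rewrite enorm_le ?sqrtr_ge0 // sqr_sqrtr ?sumr_ge0 // => [|a _]; last exact: sqr_ge0.
apply: ler_sum => a _; rewrite -expr2.
have -> : (A *m v) a 0 = dotv (\col_j A a j) v.
  by rewrite mxE; apply: eq_bigr => j _; rewrite mxE.
apply: le_trans (sq_le (CSabs _ _)) _.
rewrite exprMn ler_piMr ?sqr_ge0 //.
have := sq_le (x:=enorm v) (y:=1); rewrite expr1n; apply.
by rewrite ger0_norm ?enorm_ge0.
Qed.

Lemma opset_has_sup (R : realType) m k (A : 'M[R]_(m, k)) : has_sup (opset A).
Proof.
split; last exact: opset_ub.
by exists (enorm (A *m 0)), 0 => //=; rewrite enorm0 ler01.
Qed.

Lemma opnorm_ge0 (R : realType) m k (A : 'M[R]_(m, k)) : 0 <= opnorm A.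
Proof.
have h : opset A (enorm (A *m 0)) by exists 0 => //=; rewrite enorm0 ler01.
have := ub_le_sup (opset_ub A) h; apply: le_trans; exact: enorm_ge0.
Qed.

Lemma opnormP (R : realType) m k (A : 'M[R]_(m, k)) w :
  enorm (A *m w) <= opnorm A * enorm w.
Proof.
have [w0|wn0] := eqVneq (enorm w) 0.
  by rewrite (enorm_eq0 w0) mulmx0 !enorm0 mulr0.
have ep : 0 < enorm w by rewrite lt_def wn0 enorm_ge0.
have h : opset A (enorm (A *m ((enorm w)^-1 *: w))).
  exists ((enorm w)^-1 *: w) => //=.
  by rewrite enormZ ger0_norm ?invr_ge0 ?enorm_ge0 // mulVf.
have := ub_le_sup (opset_ub A) h.
rewrite -scalemxAr enormZ ger0_norm ?invr_ge0 ?enorm_ge0 //.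
by rewrite mulrC ler_pdivrMr // => h2; exact: h2.
Qed.

Lemma opnormT (R : realType) m k (A : 'M[R]_(m, k)) u :
  enorm (A^T *m u) <= opnorm A * enorm u.
Proof.
set w := A^T *m u.
have [w0|wn0] := eqVneq (enorm w) 0.
  by rewrite w0 mulr_ge0 ?opnorm_ge0 ?enorm_ge0.
have ep : 0 < enorm w by rewrite lt_def wn0 enorm_ge0.
have h : enorm w ^+ 2 <= enorm u * (opnorm A * enorm w).
  rewrite enorm_sq {1}/w dotv_mull trmxK.
  apply: le_trans (CS _ _) _; rewrite ler_wpM2l ?enorm_ge0 //.
  exact: opnormP.
rewrite expr2 mulrCA mulrC in h.
by rewrite -(ler_pM2r ep) -mulrA mulrC (mulrC (enorm w)).
Qed.

Lemma opnorm_low (R : realType) m k (A : 'M[R]_(m, k)) v :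
  enorm v <= 1 -> enorm (A *m v) ^+ 2 <= enorm (A^T *m (A *m v)).
Proof.
move=> hv; rewrite enorm_sq dotv_mull.
apply: le_trans (CS _ _) _.
by rewrite ler_piMl ?enorm_ge0.
Qed.

Lemma seq_max (R : realType) (T : eqType) (f : T -> R) (s : seq T) :
  s != [::] -> exists2 x, x \in s & forall y, y \in s -> f y <= f x.
Proof.
elim: s => // a s IH _.
have [->|sn] := eqVneq s [::].
  by exists a; rewrite ?mem_head // => y; rewrite inE => /eqP ->.
have [b bs hb] := IH sn.
have [ab|ba] := leP (f a) (f b).
  exists b; first by rewrite inE bs orbT.
  by move=> y; rewrite inE => /orP[/eqP ->|/hb].
exists a; first exact: mem_head.
move=> y; rewrite inE => /orP[/eqP ->//|/hb hy].
by apply: le_trans hy (ltW ba).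
Qed.

Lemma dotv_mulr (R : realType) k (g : 'M[R]_k) u v :
  dotv u (g *m v) = dotv (g^T *m u) v.
Proof. by rewrite dotvC dotv_mull dotvC. Qed.

Lemma dotv_orth (R : realType) k (g : 'M[R]_k) u v :
  g^T *m g = 1%:M -> dotv (g *m u) (g *m v) = dotv u v.
Proof. by move=> h; rewrite dotv_mulr mulmxA h mul1mx. Qed.

Lemma maxfiltP (R : realType) d (G : seq 'M[R]_d) z x :
  is_finite_orth_group G ->
  (forall g, g \in G -> dotv (g *m z) x <= maxfilt G z x) /\
  exists2 g, g \in G & maxfilt G z x = dotv (g *m z) x.
Proof.
case=> G1 GM GT GO.
set S := [set r | exists p q : 'cV[R]_d, [/\ Defs.orbit G z p, Defs.orbit G x q & r = dotv p q]].
pose f := fun gh : 'M[R]_d * 'M[R]_d => dotv (gh.1 *m z) (gh.2 *m x).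
have ne : [seq (g, h) | g <- G, h <- G] != [::].
  apply/eqP => e; have : (1%:M, 1%:M) \in [seq (g, h) | g <- G, h <- G].
    by apply/allpairsP; exists (1%:M, 1%:M).
  by rewrite e.
have [[g0 h0] /allpairsP [[g1 h1] /= [g1G h1G [-> ->]]] hm] := seq_max f ne.
have ub : ubound S (f (g1, h1)).
  move=> _ [p [q [[g gG <-] [h hG <-] ->]]].
  by apply: (hm (g, h)); apply/allpairsP; exists (g, h).
have Sm : S (f (g1, h1)).
  by exists (g1 *m z), (h1 *m x); split => //; [exists g1|exists h1].
have e : maxfilt G z x = f (g1, h1).
  apply/le_anti/andP; split; first by apply: ge_sup => //; exists (f (g1, h1)).
  by apply: ub_le_sup Sm; exists (f (g1, h1)).
split.
  move=> g gG; rewrite e; apply: ub; exists (g *m z), x; split => //.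
    by exists g.
  by exists 1%:M => //; rewrite mul1mx.
exists (h1^T *m g1); first exact: GM (GT _ h1G) g1G.
by rewrite e /f /= dotv_mulr mulmxA.
Qed.

Lemma maxfilt_act (R : realType) d (G : seq 'M[R]_d) z x h :
  is_finite_orth_group G -> h \in G -> maxfilt G z (h *m x) = maxfilt G z x.
Proof.
move=> hG hh; have [G1 GM GT GO] := hG.
have [P1 [g1 g1G e1]] := maxfiltP z (h *m x) hG.
have [P2 [g2 g2G e2]] := maxfiltP z x hG.
apply/le_anti/andP; split.
  rewrite e1 dotv_mulr mulmxA; exact: P2 (GM _ _ (GT _ hh) g1G).
rewrite e2 -(dotv_orth _ _ (GO _ hh)) mulmxA; exact: P1 (GM _ _ hh g2G).
Qed.

Lemma Phi_act (R : realType) d n (G : seq 'M[R]_d) (z : 'I_n -> 'cV[R]_d) x h :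
  is_finite_orth_group G -> h \in G -> Phi G z (h *m x) = Phi G z x.
Proof.
by move=> hG hh; apply/matrixP => i j; rewrite !mxE maxfilt_act.
Qed.

Lemma small_eta (R : realType) (s : seq (R * R)) :
  exists2 eta : R, 0 < eta &
    forall pr, pr \in s -> pr.2 != 0 -> eta * `|pr.1| < `|pr.2|.
Proof.
elim: s => [|[c e] s [eta ep IH]]; first by exists 1.
have [e0|en0] := eqVneq e 0.
  exists eta => // pr; rewrite inE => /orP[/eqP -> /=|]; first by rewrite e0 eqxx.
  exact: IH.
have ce : 0 < `|c| + 1 by rewrite ltr_wpDl.
have ee : 0 < `|e| by rewrite normr_gt0.
exists (Num.min eta (`|e| / (`|c| + 1))).
  by rewrite lt_min ep divr_gt0.
move=> pr; rewrite inE => /orP[/eqP -> /= _|prs pn0].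
  apply: le_lt_trans (_ : `|e| / (`|c| + 1) * `|c| < `|e|).
    by rewrite ler_wpM2r // ge_min lexx orbT.
  rewrite mulrAC ltr_pdivrMr // ltr_pM2l //; lra.
apply: le_lt_trans (IH _ prs pn0).
by rewrite ler_wpM2r // ge_min lexx.
Qed.

Lemma addr_neq0 (R : realType) (x y : R) : `|y| < `|x| -> x + y != 0.
Proof.
move=> h; apply/eqP => e; move: h; rewrite (_ : y = - x); last first.
  by apply/eqP; rewrite -subr_eq0 opprK addrC e.
by rewrite normrN ltxx.
Qed.

Lemma generic_dir (R : realType) d (s : seq 'cV[R]_d) :
  exists w, forall a, a \in s -> a != 0 -> dotv a w != 0.
Proof.
elim: s => [|b s [w IH]]; first by exists 0.
have [b0|bn0] := eqVneq b 0.
  exists w => a; rewrite inE => /orP[/eqP ->|]; first by rewrite b0 eqxx.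
  exact: IH.
have [bw|bw] := eqVneq (dotv b w) 0; last first.
  by exists w => a; rewrite inE => /orP[/eqP ->//|]; exact: IH.
have [eta ep He] := small_eta [seq (dotv a b, dotv a w) | a <- s].
exists (w + eta *: b) => a; rewrite inE dotvDr dotvZr => /orP[/eqP -> _|aS an0].
  rewrite bw add0r mulf_neq0 //; first by rewrite gt_eqF. apply/eqP => /dotv_eq0.
  by apply/eqP.
apply: addr_neq0; rewrite normrM gtr0_norm //.
have := He (dotv a b, dotv a w); apply => /=; last exact: IH.
by apply/mapP; exists a.
Qed.
Lemma affine_sign (R : realType) (u k s t r : R) : s < t -> (r = s \/ r = t) -> k != 0 ->
  u + (s + t) / 2 * k <= 0 -> ~ (s < - u / k < t) -> u + r * k <= 0.
Proof.
move=> st hr k0 hm hc; set c := - u / k in hc.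
have uc : u = - c * k by rewrite /c; field.
rewrite uc in hm *; rewrite leNgt; apply/negP => hr2; apply: hc.
have [kp|kn] := ltP 0 k.
  have e1 : (s + t) / 2 <= c by nra.
  have e2 : c < r by nra.
  by case: hr => e; apply/andP; split; lra.
have kn' : k < 0 by rewrite lt_neqAle k0 kn.
have e1 : c <= (s + t) / 2 by nra.
have e2 : r < c by nra.
by case: hr => e; apply/andP; split; lra.
Qed.

Definition diffs (R : realType) d n (G : seq 'M[R]_d) (z : 'I_n -> 'cV[R]_d) :=
  flatten [seq [seq g *m z i - h *m z i | g <- G, h <- G] | i <- enum 'I_n].

Lemma diffsP (R : realType) d n (G : seq 'M[R]_d) (z : 'I_n -> 'cV[R]_d) i g h :
  g \in G -> h \in G -> g *m z i - h *m z i \in diffs G z.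
Proof.
move=> gG hG; apply/flattenP; exists [seq g *m z i - h *m z i | g <- G, h <- G].
  by apply/mapP; exists i; rewrite ?mem_enum.
by apply/allpairsP; exists (g, h).
Qed.

Lemma voronoi_of (R : realType) d (G : seq 'M[R]_d) (z y : 'cV[R]_d) g :
  is_finite_orth_group G -> g \in G ->
  (forall h, h \in G -> dotv (h *m z) y <= dotv (g *m z) y) ->
  (forall h, h \in G -> dotv (h *m z) y = dotv (g *m z) y -> h *m z = g *m z) ->
  voronoi G (g *m z) y.
Proof.
move=> [G1 GM GT GO] gG H1 H2; split.
  by move=> _ [h hG <-]; rewrite mulmxA; apply: H1; apply: GM.
by move=> _ [h hG <-]; rewrite mulmxA => e; apply: H2 => //; apply: GM.
Qed.

Lemma voronoi_strict (R : realType) d (G : seq 'M[R]_d) (z y : 'cV[R]_d) g h :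
  is_finite_orth_group G -> g \in G -> h \in G -> voronoi G (g *m z) y ->
  h *m z != g *m z -> dotv (h *m z) y < dotv (g *m z) y.
Proof.
move=> [G1 GM GT GO] gG hG [V1 V2] ne.
have o : Defs.orbit G (g *m z) (h *m z).
  exists (h *m g^T); first by apply: GM => //; apply: GT.
  by rewrite -mulmxA (mulmxA g^T) GO // mul1mx.
rewrite lt_neqAle V1 // andbT; apply/eqP => e; move/eqP: ne; apply.
exact: V2.
Qed.

Lemma colmatT (R : realType) d n (g : 'I_n -> 'M[R]_d) (z : 'I_n -> 'cV[R]_d) D i :
  ((colmat g z)^T *m D) i 0 = dotv (g i *m z i) D.
Proof. by rewrite mxE; apply: eq_bigr => a _; rewrite !mxE. Qed.

Lemma seg_step (R : realType) d n (G : seq 'M[R]_d) (z : 'I_n -> 'cV[R]_d)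
  (hG : is_finite_orth_group G) (L : R)
  (HL : forall g, admissible G z g -> opnorm (colmat g z) <= L) (x D : 'cV[R]_d) s t :
  s <= t ->
  (forall a, a \in diffs G z -> dotv a D != 0 -> ~ (s < - dotv a x / dotv a D < t)) ->
  enorm (Phi G z (x + t *: D) - Phi G z (x + s *: D)) <= (t - s) * L * enorm D.
Proof.
rewrite le_eqVlt => /orP [/eqP <-| st] hC.
  by rewrite !subrr enorm0 !mul0r.
set m := (s + t) / 2; set p := x + m *: D.
have [w Hw] := generic_dir (diffs G z).
have [eta ep He] := small_eta [seq (dotv a w, dotv a p) | a <- diffs G z].
set q := p + eta *: w.
have Hq : forall a, dotv a q = dotv a p + eta * dotv a w.
  by move=> a; rewrite /q dotvDr dotvZr.
have hE : forall a, a \in diffs G z ->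
    `|eta * dotv a w| < `|dotv a p| \/ dotv a p = 0.
  move=> a aD; have [h0|hn0] := eqVneq (dotv a p) 0; first by right.
  left; rewrite normrM gtr0_norm //.
  by apply: (He (dotv a w, dotv a p)) => //; apply/mapP; exists a.
have [g Hg] : exists g : 'I_n -> 'M[R]_d,
    forall i, g i \in G /\ maxfilt G (z i) q = dotv (g i *m z i) q.
  have [f Hf] := choice (P := fun i g => g \in G /\ maxfilt G (z i) q = dotv (g *m z i) q)
    (fun i => let: conj _ (ex_intro2 g gG e) := maxfiltP (z i) q hG in ex_intro _ g (conj gG e)).
  by exists f.
have max_q : forall i h, h \in G -> dotv (h *m z i) q <= dotv (g i *m z i) q.
  by move=> i h hh; rewrite -(Hg i).2; apply: (maxfiltP (z i) q hG).1.
have adm : admissible G z g.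
  split => [i|]; first by case: (Hg i).
  exists q => i; apply: voronoi_of => //; [by case: (Hg i) | exact: max_q | ].
  move=> h hh e; apply/eqP; rewrite -subr_eq0; apply/negP => an0.
  have aD := diffsP z i hh (Hg i).1.
  have : dotv (h *m z i - g i *m z i) q = 0 by rewrite dotvBl e subrr.
  rewrite Hq; case: (hE _ aD) => [hlt|h0].
    by move/eqP; apply/negP; apply: addr_neq0.
  rewrite h0 add0r => /eqP; rewrite mulf_eq0 (gt_eqF ep) /=.
  by rewrite (negbTE (Hw _ aD (introN idP an0))).
have max_r : forall i h r, h \in G -> (r = s \/ r = t) ->
    dotv (h *m z i - g i *m z i) (x + r *: D) <= 0.
  move=> i h r hh hr; set a := h *m z i - g i *m z i.
  have aD : a \in diffs G z := diffsP z i hh (Hg i).1.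
  have hp : dotv a p <= 0.
    rewrite leNgt; apply/negP => pp.
    have hq : dotv a q <= 0 by rewrite dotvBl subr_le0; exact: max_q.
    rewrite Hq in hq; case: (hE _ aD) => [hlt|h0]; last by rewrite h0 ltxx in pp.
    move: hlt; rewrite (gtr0_norm pp) ltr_norml => /andP[h1 _]; lra.
  move: hp; rewrite /p /m !dotvDr !dotvZr => hp.
  have [aD0|aDn] := eqVneq (dotv a D) 0.
    by move: hp; rewrite aD0 !mulr0.
  apply: (affine_sign st hr aDn hp).
  exact: hC.
have val : forall i r, (r = s \/ r = t) ->
    maxfilt G (z i) (x + r *: D) = dotv (g i *m z i) (x + r *: D).
  move=> i r hr; have [P1 [h hh e]] := maxfiltP (z i) (x + r *: D) hG.
  apply/le_anti/andP; split; last exact: P1 (Hg i).1.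
  by rewrite e; have := max_r i h r hh hr; rewrite dotvBl subr_le0.
have eq : Phi G z (x + t *: D) - Phi G z (x + s *: D) =
    (t - s) *: ((colmat g z)^T *m D).
  apply/matrixP => i j; rewrite (ord1 j).
  rewrite [LHS]mxE [in LHS]mxE [in LHS]mxE [in LHS]mxE [RHS]mxE colmatT.
  rewrite val; last by right.
  rewrite val; last by left.
  rewrite !dotvDr !dotvZr; ring.
have ts : 0 <= t - s by rewrite subr_ge0 ltW.
rewrite eq enormZ ger0_norm // -mulrA ler_wpM2l //.
apply: le_trans (opnormT _ _) _; rewrite ler_wpM2r ?enorm_ge0 //.
exact: HL.
Qed.

Lemma count_lt (T : eqType) (P Q : pred T) (s : seq T) x :
  (forall y, P y -> Q y) -> x \in s -> Q x -> ~~ P x -> (count P s < count Q s)%N.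
Proof.
move=> PQ; elim: s => // a s IH; rewrite inE => /orP[/eqP <-|xs] Qx Px /=.
  rewrite (negbTE Px) Qx add0n add1n ltnS; exact: sub_count.
have := IH xs Qx Px; case: (P a) (PQ a) => /=; last by lia.
by move=> ->.
Qed.

Lemma lip (R : realType) d n (G : seq 'M[R]_d) (z : 'I_n -> 'cV[R]_d)
  (hG : is_finite_orth_group G) (L : R)
  (HL : forall g, admissible G z g -> opnorm (colmat g z) <= L) (x y : 'cV[R]_d) :
  enorm (Phi G z y - Phi G z x) <= L * enorm (y - x).
Proof.
set D := y - x.
set C := [seq - dotv a x / dotv a D | a <- diffs G z & dotv a D != 0].
suff H : forall k (s t : R), s <= t -> (count (fun c : R => (s < c)%R && (c < t)%R) C <= k)%N ->
    enorm (Phi G z (x + t *: D) - Phi G z (x + s *: D)) <= (t - s) * L * enorm D.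
  have := H (size C) 0 1 ler01 (count_size _ _).
  by rewrite scale1r scale0r addr0 /D (addrC x (y - x)) subrK subr0 mul1r.
elim=> [|k IH] s t st hc.
  apply: seg_step => // a aD aDn hin.
  have : has (fun c => (s < c) && (c < t)) C.
    apply/hasP; exists (- dotv a x / dotv a D) => //.
    by apply/mapP; exists a => //; rewrite mem_filter aDn.
  by move=> hh; move: hc; rewrite leqn0; move: hh; rewrite has_count; case: (count _ _).
have [/hasP [c cC /andP [sc ct]]|hn] := boolP (has (fun c => (s < c) && (c < t)) C).
  have h1 : (count (fun c' : R => (s < c')%R && (c' < c)%R) C <= k)%N.
    have := count_lt (P := fun c' => (s < c') && (c' < c))
      (Q := fun c : R => (s < c)%R && (c < t)%R) _ cC.
    rewrite sc ct ltxx andbF /= => /(_ _ isT isT).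
    move=> h; rewrite -ltnS; apply: (leq_trans (h _) hc).
    by move=> y0 /andP [-> h0] /=; apply: lt_trans ct.
  have h2 : (count (fun c' : R => (c < c')%R && (c' < t)%R) C <= k)%N.
    have := count_lt (P := fun c' => (c < c') && (c' < t))
      (Q := fun c : R => (s < c)%R && (c < t)%R) _ cC.
    rewrite sc ct ltxx /= => /(_ _ isT isT).
    move=> h; rewrite -ltnS; apply: (leq_trans (h _) hc).
    by move=> y0 /andP [h0 ->]; rewrite andbT; apply: lt_trans h0.
  have e1 := IH s c (ltW sc) h1; have e2 := IH c t (ltW ct) h2.
  rewrite -(subrK (Phi G z (x + c *: D)) (Phi G z (x + t *: D))) -addrA.
  apply: le_trans (enormD _ _) _.
  have -> : (t - s) * L * enorm D = (t - c) * L * enorm D + (c - s) * L * enorm D.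
    ring.
  exact: lerD.
apply: seg_step => // a aD aDn hin; move/hasP: hn; apply.
exists (- dotv a x / dotv a D) => //.
by apply/mapP; exists a => //; rewrite mem_filter aDn.
Qed.

Lemma qdist_props (R : realType) d n (G : seq 'M[R]_d) (z : 'I_n -> 'cV[R]_d)
  (hG : is_finite_orth_group G) (L : R)
  (HL : forall g, admissible G z g -> opnorm (colmat g z) <= L) (x y : 'cV[R]_d) :
  0 <= L ->
  [/\ 0 <= qdist G x y, qdist G x y <= enorm (x - y) &
      enorm (Phi G z x - Phi G z y) <= L * qdist G x y].
Proof.
move=> L0.
set S := [set r | exists p q : 'cV[R]_d,
   [/\ Defs.orbit G x p, Defs.orbit G y q & r = enorm (p - q)]].
have Sxy : S (enorm (x - y)).
  by have [G1 _ _ _] := hG; exists x, y; split => //; [exists 1%:M | exists 1%:M] => //; rewrite mul1mx.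
have ne : S !=set0 by exists (enorm (x - y)).
have lb0 : lbound S 0 by move=> _ [p [q [_ _ ->]]]; exact: enorm_ge0.
have key : forall r, S r -> enorm (Phi G z x - Phi G z y) <= L * r.
  move=> _ [_ [_ [[g gG <-] [h hG0 <-] ->]]].
  rewrite -(Phi_act z x hG gG) -(Phi_act z y hG hG0).
  have := lip hG HL (h *m y) (g *m x); rewrite -enormN opprB.
  by rewrite -(enormN (g *m x - h *m y)) opprB.
split.
- exact: lb_le_inf.
- by have := ge_inf (ex_intro _ 0 lb0) Sxy.
- have [L00|Lp] := eqVneq L 0.
    by have := key _ Sxy; rewrite L00 !mul0r.
  have Lp' : 0 < L by rewrite lt_def Lp L0.
  rewrite -ler_pdivrMl //; apply: lb_le_inf => // r Sr.
  by rewrite ler_pdivrMl //; apply: key.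
Qed.

Lemma Phi_orbit (R : realType) d n (G : seq 'M[R]_d) (z : 'I_n -> 'cV[R]_d) x y :
  Defs.orbit G x = Defs.orbit G y -> Phi G z x = Phi G z y.
Proof. by move=> e; rewrite /Phi /maxfilt e. Qed.

Lemma adm_exists (R : realType) d n (G : seq 'M[R]_d) (z : 'I_n -> 'cV[R]_d) :
  is_finite_orth_group G -> exists g, admissible G z g.
Proof.
move=> hG; have [w Hw] := generic_dir (diffs G z).
have [g Hg] := choice (P := fun i g => g \in G /\ maxfilt G (z i) w = dotv (g *m z i) w)
    (fun i => let: conj _ (ex_intro2 g gG e) := maxfiltP (z i) w hG in ex_intro _ g (conj gG e)).
exists g; split => [i|]; first by case: (Hg i).
exists w => i; apply: voronoi_of => //; first by case: (Hg i).
  by move=> h hh; rewrite -(Hg i).2; apply: (maxfiltP (z i) w hG).1.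
move=> h hh e; apply/eqP; rewrite -subr_eq0; apply/negP => an0.
have aD := diffsP z i hh (Hg i).1.
have := Hw _ aD (introN idP an0); rewrite dotvBl e subrr.
by rewrite eqxx.
Qed.

Lemma adm_max (R : realType) d n (G : seq 'M[R]_d) (z : 'I_n -> 'cV[R]_d) :
  is_finite_orth_group G -> exists g, admissible G z g /\
    forall g', admissible G z g' -> opnorm (colmat g' z) <= opnorm (colmat g z).
Proof.
move=> hG; have [g0 a0] := adm_exists z hG.
pose dec (k : {ffun 'I_n -> 'I_(size G)}) := fun i => nth 1%:M G (k i).
have enc : forall g, admissible G z g -> exists k, dec k = g.
  move=> g [gG _].
  have hk : forall i, (index (g i) G < size G)%N by move=> i; rewrite index_mem.
  exists [ffun i => Ordinal (hk i)]; apply: funext => i.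
  by rewrite /dec ffunE /= nth_index.
pose ks := [seq k <- enum {ffun 'I_n -> 'I_(size G)} | `[< admissible G z (dec k) >]].
have inks : forall k, (k \in ks) = `[< admissible G z (dec k) >].
  by move=> k; rewrite mem_filter mem_enum andbT.
have [k0 ek0] := enc _ a0.
have ne : ks != [::].
  apply/eqP => e; have : k0 \in ks by rewrite inks ek0; apply/asboolP.
  by rewrite e.
have [km kmi Hm] := seq_max (fun k => opnorm (colmat (dec k) z)) ne.
exists (dec km); split; first by move: kmi; rewrite inks => /asboolP.
move=> g' a'; have [k' ek] := enc _ a'; rewrite -ek.
by apply: Hm; rewrite inks; apply/asboolP; rewrite ek.
Qed.

Unset Implicit Arguments.

Theorem theorem14 (R : realType) (d n : nat) (G : seq 'M[R]_d)
  (z : 'I_n -> 'cV[R]_d) :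
  (0 < d)%N -> is_finite_orth_group G ->
  exists g : 'I_n -> 'M[R]_d,
    [/\ admissible G z g,
        (forall g', admissible G z g' -> opnorm (colmat g' z) <= opnorm (colmat g z)),
        has_sup (lip_quotients G z) &
        sup (lip_quotients G z) = opnorm (colmat g z)].
Proof.
move=> d0 hG.
have [g [ag Hmax]] := adm_max z hG.
set L := opnorm (colmat g z).
have L0 : 0 <= L := opnorm_ge0 _.
have HL : forall g', admissible G z g' -> opnorm (colmat g' z) <= L := Hmax.
have ub : ubound (lip_quotients G z) L.
  move=> _ [x [y [_ ->]]]; have [q0 _ qE] := qdist_props hG HL x y L0.
  have [e|ne] := eqVneq (qdist G x y) 0; first by rewrite e invr0 mulr0.
  have qp : 0 < qdist G x y by rewrite lt_def ne q0.
  by rewrite ler_pdivrMr // (mulrC (qdist G x y)).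
have LQge0 : forall r, lip_quotients G z r -> 0 <= r.
  move=> _ [x [y [_ ->]]]; rewrite divr_ge0 ?enorm_ge0 //.
  by case: (qdist_props hG HL x y L0).
have ne : lip_quotients G z !=set0.
  pose e : 'cV[R]_d := const_mx 1.
  exists (enorm (Phi G z 0 - Phi G z e) / qdist G 0 e), 0, e; split => //.
  move=> E; have [G1 _ _ _] := hG.
  have : Defs.orbit G 0 e by rewrite E; exists 1%:M => //; rewrite mul1mx.
  case=> h _; rewrite mulmx0 => he.
  have := congr1 (fun M : 'cV[R]_d => M (Ordinal d0) 0) he; rewrite !mxE => /eqP.
  by rewrite eq_sym oner_eq0.
have hub : has_ubound (lip_quotients G z) by exists L.
have hs : has_sup (lip_quotients G z) by split.
exists g; split => //.
apply/le_anti/andP; split; first exact: ge_sup.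
have [r0 r0in] := ne.
have sup0 : 0 <= sup (lip_quotients G z).
  by apply: le_trans (LQge0 _ r0in) _; apply: ub_le_sup.
rewrite /opnorm; apply: ge_sup.
  by exists (enorm (colmat g z *m 0)), 0 => //=; rewrite enorm0 ler01.
move=> _ [v /= hv <-].
set A := colmat g z; set u := A *m v.
have [u0|un0] := eqVneq (enorm u) 0; first by rewrite u0.
have up : 0 < enorm u by rewrite lt_def un0 enorm_ge0.
case: ag => gG [y0 Hy0].
have [eta ep He] := small_eta [seq (dotv a u, dotv a y0) | a <- diffs G z].
set y1 := y0 + eta *: u.
have val : forall i y, (y = y0 \/ y = y1) -> maxfilt G (z i) y = dotv (g i *m z i) y.
  move=> i y hy; have [P1 [h hh e]] := maxfiltP (z i) y hG.
  apply/le_anti/andP; split; last exact: P1 (gG i).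
  rewrite e -subr_le0 -dotvBl.
  have [eq0|neq] := eqVneq (h *m z i) (g i *m z i).
    by rewrite eq0 subrr dotv0l.
  have aD := diffsP z i hh (gG i).
  have lt0 : dotv (h *m z i - g i *m z i) y0 < 0.
    by rewrite dotvBl subr_lt0; apply: (voronoi_strict hG).
  case: hy => ->; first exact: ltW.
  rewrite /y1 dotvDr dotvZr.
  set a := h *m z i - g i *m z i.
  have mem : (dotv a u, dotv a y0) \in [seq (dotv a u, dotv a y0) | a <- diffs G z].
    by apply/mapP; exists a.
  have := He _ mem (ltr0_neq0 lt0); rewrite /= (ltr0_norm lt0) => h'.
  have h2 : eta * dotv a u <= eta * `|dotv a u|.
    by apply: ler_wpM2l; [exact: ltW | exact: ler_norm].
  apply: ltW; lra.
have eqPhi : Phi G z y1 - Phi G z y0 = eta *: (A^T *m u).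
  apply/matrixP => i j; rewrite (ord1 j).
  rewrite [LHS]mxE [in LHS]mxE [in LHS]mxE [in LHS]mxE [RHS]mxE colmatT.
  rewrite val; last by right.
  rewrite val; last by left.
  rewrite /y1 !dotvDr !dotvZr; ring.
have low : enorm u ^+ 2 <= enorm (A^T *m u) := opnorm_low A hv.
have [q0 qle qE] := qdist_props hG HL y1 y0 L0.
set E := enorm (Phi G z y1 - Phi G z y0) in qE.
have EE : E = eta * enorm (A^T *m u) by rewrite /E eqPhi enormZ gtr0_norm.
have ATp : 0 < enorm (A^T *m u).
  by apply: lt_le_trans low; rewrite exprn_gt0.
have Ep : 0 < E by rewrite EE mulr_gt0.
have qp : 0 < qdist G y1 y0.
  rewrite lt_def q0 andbT; apply/eqP => e0; move: qE; rewrite e0 mulr0.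
  by rewrite leNgt Ep.
have qle' : qdist G y1 y0 <= eta * enorm u.
  by move: qle; rewrite /y1 (addrC y0) addrK enormZ gtr0_norm.
have orb : Defs.orbit G y1 <> Defs.orbit G y0.
  move=> e0; move: Ep; rewrite /E (Phi_orbit z e0) subrr enorm0 ltxx.
  by [].
have inLQ : lip_quotients G z (E / qdist G y1 y0) by exists y1, y0.
apply: le_trans (ub_le_sup hub inLQ).
rewrite ler_pdivlMr //.
apply: le_trans (ler_wpM2l (enorm_ge0 u) qle') _.
by rewrite EE mulrCA -expr2 ler_wpM2l // ltW.
Qed.
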